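(* Let $t\ge 2$ and let $S=\{s_1,\ldots,s_t\}\subseteq BS(1,3)$ with $s_i=b^{m_i}a^{x_i}$, where $x_1,\dots,x_t\in\mathbb Z$ and $1\le m_1<m_2<\cdots<m_t$ are integers, so $k=|S|=t$. If $S$ is non-abelian, then $|S^2|\geq 4k-4$.
   Context: $BS(1,3)=\langle a,b\mid ab=ba^3\rangle$, in which $(b^m a^x)(b^n a^y)=b^{m+n}a^{y+3^n x}$ for integers $m,n\ge0$ and $x,y\in\mathbb Z$. $S^2=\{st: s,t\in S\}$. A set is non-abelian if the subgroup it generates is non-abelian. *)

(* Defs.v *)
From HB Require Import structures.
From mathcomp Require Import all_boot all_order all_algebra.
Set Implicit Arguments. Unset Strict Implicit. Unset Printing Implicit Defensive.
Import Order.TTheory GRing.Theory Num.Theory.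
Local Open Scope ring_scope.

(* BS(1,3) = <a,b | ab = ba^3> is isomorphic to Z[1/3] ⋊ Z; we embed it in
   Q ⋊ Z. The pair (m, x) stands for b^m a^x, with the product
   (b^m a^x)(b^n a^y) = b^(m+n) a^(y + 3^n x)   (m, n, x, y possibly any). *)
Definition bs := (int * rat)%type.

Definition bs_one : bs := (0, 0).
Definition bs_mul (g h : bs) : bs := (g.1 + h.1, h.2 + (3%:Q) ^ h.1 * g.2).
Definition bs_inv (g : bs) : bs := (- g.1, - ((3%:Q) ^ (- g.1) * g.2)).

Definition bs_elt (m : nat) (x : int) : bs := (m%:Z, x%:~R).

Inductive gen (S : seq bs) : bs -> Prop :=
  | gen_mem g : g \in S -> gen S g
  | gen_one : gen S bs_one
  | gen_inv g : gen S g -> gen S (bs_inv g)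
  | gen_mul g h : gen S g -> gen S h -> gen S (bs_mul g h).

Definition nonabelian (S : seq bs) : Prop :=
  exists g h, [/\ gen S g, gen S h & bs_mul g h <> bs_mul h g].

Definition sqset (S : seq bs) : seq bs :=
  undup [seq bs_mul s t | s <- S, t <- S].

(* Main.v *)
Require Import Defs.
From HB Require Import structures.
From mathcomp Require Import all_boot all_order all_algebra ring.
Import Order.TTheory GRing.Theory Num.Theory.
Local Open Scope ring_scope.

Definition cls (g : bs) (r : rat) : Prop := g.2 = r * ((3%:Q) ^ g.1 - 1).

Lemma three_neq0 : (3%:Q) != 0. Proof. by []. Qed.

Lemma cls_mul g h r : cls g r -> cls h r -> cls (bs_mul g h) r.
Proof.
rewrite /cls /bs_mul /= => -> ->.
rewrite (expfzDr _ _ three_neq0); ring.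
Qed.

Lemma cls_one r : cls bs_one r.
Proof. by rewrite /cls /= expr0z subrr mulr0. Qed.

Lemma cls_inv g r : cls g r -> cls (bs_inv g) r.
Proof.
rewrite /cls /bs_inv /= => ->.
have h : (3%:Q) ^ (- g.1) * 3 ^ g.1 = 1.
  by rewrite -(expfzDr _ _ three_neq0) addNr expr0z.
move: h; set u := (3%:Q) ^ (- g.1); set v := (3%:Q) ^ g.1 => h.
have -> : - (u * (r * (v - 1))) = r * (1 - u * v) + r * (u - 1) by ring.
by rewrite h subrr mulr0 add0r.
Qed.

Lemma cls_comm g h r : cls g r -> cls h r -> bs_mul g h = bs_mul h g.
Proof.
rewrite /cls /bs_mul => eg eh; congr pair; first by rewrite addrC.
rewrite eg eh; ring.
Qed.

Lemma cls_mulL g h r : cls g r -> cls (bs_mul g h) r -> cls h r.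
Proof.
rewrite /cls /bs_mul /= => eg; rewrite eg (expfzDr _ _ three_neq0) => H.
move: H. set a := (3%:Q) ^ g.1. set b := (3%:Q) ^ h.1 => H.
apply: (addIr (b * (r * (a - 1)))); rewrite H; ring.
Qed.

Lemma cls_mulR g h r : cls g r -> cls (bs_mul h g) r -> cls h r.
Proof.
rewrite /cls /bs_mul /= => eg; rewrite eg (expfzDr _ _ three_neq0) => H.
have a0 : (3%:Q) ^ g.1 != 0 by rewrite expfz_neq0.
move: H a0. set a := (3%:Q) ^ g.1. set b := (3%:Q) ^ h.1 => H a0.
apply: (mulfI a0).
have : a * h.2 = r * (b * a - 1) - r * (a - 1) by rewrite -H; ring.
move=> ->; ring.
Qed.

Lemma cls_commR g h r : (3%:Q) ^ g.1 != 1 -> cls g r -> bs_mul g h = bs_mul h g -> cls h r.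
Proof.
rewrite /cls /bs_mul /= => a1 eg [_ H].
move: H a1; rewrite eg. set a := (3%:Q) ^ g.1. set b := (3%:Q) ^ h.1 => H a1.
have a1' : (1 - a) != 0 by rewrite subr_eq0 eq_sym.
apply: (mulfI a1').
have : (1 - a) * h.2 = r * (a - 1) * (1 - b).
  have -> : (1 - a) * h.2 = (h.2 + b * (r * (a - 1))) - (r * (a - 1) + a * h.2) + r * (a - 1) * (1 - b) by ring.
  by rewrite H subrr add0r.
move=> ->; ring.
Qed.

Lemma cls_uniq g r r' : (3%:Q) ^ g.1 != 1 -> cls g r -> cls g r' -> r = r'.
Proof.
rewrite /cls => a1 -> /eqP; rewrite -subr_eq0 -mulrBl mulf_eq0 !subr_eq0 (negbTE a1) orbF.
by move/eqP.
Qed.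

Lemma gen_cls (S : seq bs) r g : (forall s, s \in S -> cls s r) -> gen S g -> cls g r.
Proof.
move=> HS; elim=> {g}; [by move=> ? /HS | exact: cls_one | by move=> ? _ /cls_inv |].
by move=> ? ? _ h1 _ h2; apply: cls_mul.
Qed.

Arguments cls_mul {g h r}.
Arguments cls_mulL {g h r}.
Arguments cls_mulR {g h r}.
Arguments cls_commR {g h r}.
Arguments cls_uniq {g r r'}.
From mathcomp Require Import zify.

Section Comb.
Variables (m : nat -> nat) (x : nat -> int) (N : nat).
Hypothesis m0 : (1 <= m 0)%N.
Hypothesis inc : forall i j, (i < j < N)%N -> (m i < m j)%N.

Definition e i := bs_elt (m i) (x i).
Definition P a b := bs_mul (e a) (e b).
Definition R i : rat := (x i)%:~R / ((3%:Q) ^+ (m i) - 1).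
Definition inSq T g := exists a b, [/\ (a < T)%N, (b < T)%N & g = P a b].

Lemma mpos i : (i < N)%N -> (1 <= m i)%N.
Proof.
case: i => [//|i] hi; apply: leq_trans m0 _; apply: ltnW; apply: inc.
by rewrite ltn0Sn.
Qed.

Arguments mpos {i}.
Lemma mle i j : (i <= j)%N -> (j < N)%N -> (m i <= m j)%N.
Proof.
rewrite leq_eqVlt => /orP [/eqP -> //|hij hj]; apply: ltnW; apply: inc.
by rewrite hij.
Qed.

Arguments mle {i j}.
Lemma mlt i j : (i < j)%N -> (j < N)%N -> (m i < m j)%N.
Proof. by move=> hij hj; apply: inc; rewrite hij. Qed.

Arguments mlt {i j}.
Lemma minj i j : (i < N)%N -> (j < N)%N -> m i = m j -> i = j.
Proof.
move=> hi hj E; case: (ltngtP i j) => // h.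
- by have := mlt h hj; rewrite E ltnn.
- by have := mlt h hi; rewrite E ltnn.
Qed.

Lemma pow_ne1 n : (0 < n)%N -> (3%:Q) ^ (Posz n) != 1.
Proof.
move=> hn; rewrite /exprz. have h : (1 : rat) < 3 ^+ n by rewrite exprn_egt1 // -lt0n.
by rewrite gt_eqF.
Qed.

Lemma e_ne1 i : (i < N)%N -> (3%:Q) ^ (e i).1 != 1.
Proof. by move=> hi; apply: pow_ne1; have := mpos hi. Qed.

Arguments e_ne1 {i}.
Lemma P1 a b : (P a b).1 = Posz (m a + m b).
Proof. by rewrite /P /bs_mul /e /bs_elt /= PoszD. Qed.

Lemma P_ne1 a b : (a < N)%N -> (3%:Q) ^ (P a b).1 != 1.
Proof. by move=> ha; rewrite P1; apply: pow_ne1; have := mpos ha; lia. Qed.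

Lemma cls_e i : (i < N)%N -> cls (e i) (R i).
Proof.
move=> hi; rewrite /cls /e /bs_elt /= /R /exprz.
have h : (3%:Q) ^+ m i - 1 != 0.
  by rewrite subr_eq0; have := @pow_ne1 _ (mpos hi); rewrite /exprz.
by rewrite divfK.
Qed.

Arguments cls_e {i}.
Lemma clsE i r : (i < N)%N -> cls (e i) r <-> R i = r.
Proof.
move=> hi; split; first by move=> h; apply: cls_uniq (e_ne1 hi) (cls_e hi) h.
by move=> <-; apply: cls_e.
Qed.

Lemma P_lvl a b c d : P a b = P c d -> (m a + m b = m c + m d)%N.
Proof. by move=> E; have := congr1 fst E; rewrite !P1 => -[]. Qed.

Lemma neq_lvl a b c d : (m a + m b != m c + m d)%N -> P a b != P c d.
Proof. by move=> h; apply/eqP => /P_lvl /eqP; rewrite (negbTE h). Qed.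

Lemma noncomm a b : (a < N)%N -> (b < N)%N -> R a <> R b -> P a b != P b a.
Proof.
move=> ha hb hR; apply/eqP => E; apply: hR.
have := cls_commR (e_ne1 ha) (cls_e ha) E; by move/(clsE _ _ hb).
Qed.

Lemma inSq_mono T T' g : (T <= T')%N -> inSq T g -> inSq T' g.
Proof.
move=> h [a [b [ha hb ->]]]; exists a, b; split => //; exact: leq_trans h.
Qed.

Lemma inSq_lvl T a b : (T <= N)%N -> inSq T (P a b) ->
  (m a + m b <= m T.-1 + m T.-1)%N.
Proof.
move=> hT [c [d [hc hd /P_lvl ->]]].
have h1 : (T.-1 < N)%N by lia.
have := mle (_ : (c <= T.-1)%N) h1; have := mle (_ : (d <= T.-1)%N) h1.
move=> H1 H2; have := H1 ltac:(lia); have := H2 ltac:(lia); lia.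
Qed.

Lemma notin_lvl T a b : (T <= N)%N -> (m T.-1 + m T.-1 < m a + m b)%N ->
  ~ inSq T (P a b).
Proof. by move=> hT h /(inSq_lvl _ _ _ hT); lia. Qed.

Lemma inSq_cls T r g : (T <= N)%N -> (forall i, (i < T)%N -> R i = r) ->
  inSq T g -> cls g r.
Proof.
move=> hT H [a [b [ha hb ->]]]; apply: cls_mul.
- by apply/(clsE _ _ (leq_trans ha hT)); apply: H.
- by apply/(clsE _ _ (leq_trans hb hT)); apply: H.
Qed.

Lemma uniq_app T s L : (forall g, g \in L -> inSq T g) ->
  (forall g, g \in s -> ~ inSq T g) -> uniq s -> uniq L -> uniq (s ++ L).
Proof.
move=> HL Hs us uL; rewrite cat_uniq us uL andbT /=.
apply/hasPn => g /HL h; apply/negP => /Hs; exact.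
Qed.

Lemma uniq4 (a b c d : bs) : a != b -> a != c -> a != d -> b != c -> b != d ->
  c != d -> uniq [:: a; b; c; d].
Proof.
move=> ab ac ad bc bd cd /=; rewrite !inE !negb_or ab ac ad bc bd cd; done.
Qed.

Lemma chain T : (0 < T)%N -> (T <= N)%N -> exists L,
  [/\ uniq L, forall g, g \in L -> inSq T g & (2 * T - 1 <= size L)%N].
Proof.
elim: T => [//|T IH] _ hT.
case: (posnP T) => [T0|Tp].
  exists [:: P 0 0]; split => //; last by rewrite T0.
  move=> g; rewrite inE => /eqP ->; exists 0%N, 0%N; split => //; lia.
have [L' [uL' mL' sL']] := IH Tp (ltnW hT).
have hlt : (m T.-1 < m T)%N by apply: mlt; lia.
exists ([:: P T.-1 T; P T T] ++ L'); split.
- apply: (uniq_app T) => //.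
  + move=> g; rewrite !inE => /orP [] /eqP ->; apply: notin_lvl; lia.
  + by rewrite /= inE andbT; apply: neq_lvl; lia.
- move=> g; rewrite mem_cat !inE => /orP [/orP [] /eqP ->|/mL'].
  + exists T.-1, T; split => //; lia.
  + exists T, T; split => //; lia.
  + by apply: inSq_mono; lia.
- move: sL'; rewrite size_cat /=; move: (size L') => n; lia.
Qed.


Lemma mem_iota0 k t : (k \in iota 0 t) = (k < t)%N.
Proof. by rewrite mem_iota add0n. Qed.

Lemma lvl_only t a b : (2 <= t)%N -> (t < N)%N -> (a < t)%N -> (b < t)%N ->
  (m a + m b = m t.-2 + m t)%N -> a = t.-1 /\ b = t.-1.
Proof.
move=> t2 ht ha hb E.
have h1 : (m t.-1 < m t)%N by apply: mlt; lia.
have F k : (k < t)%N -> (k <= t.-1)%N -> (m k <= m t.-1)%N.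
  by move=> hk hk1; apply: mle => //; lia.
have G k : (k < t.-1)%N -> (m k <= m t.-2)%N.
  by move=> hk; apply: mle; lia.
have Fa := F a ha ltac:(lia); have Fb := F b hb ltac:(lia).
case: (ltnP a t.-1) => Ha.
  have := G a Ha; lia.
case: (ltnP b t.-1) => Hb.
  have := G b Hb; lia.
split; lia.
Qed.

Lemma main T : (0 < T)%N -> (T <= N)%N ->
  (exists i j, [/\ (i < T)%N, (j < T)%N & R i <> R j]) -> exists L,
  [/\ uniq L, forall g, g \in L -> inSq T g & (4 * T - 4 <= size L)%N].
Proof.
elim: T => [//|t IH] _ ht [i [j [hi hj hRij]]].
have t0 : (0 < t)%N.
  rewrite lt0n; apply/eqP => t0; subst t; move: hi hj hRij.
  by rewrite !ltnS !leqn0 => /eqP -> /eqP ->.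
have hidx k : (k <= t)%N -> (k < N)%N by move=> hk; apply: leq_ltn_trans hk ht.
have htt : (m t.-1 < m t)%N by apply: mlt; lia.
case Ha: (all (fun k => R k == R 0) (iota 0 t)).
- have HA : forall k, (k < t)%N -> R k = R 0.
    by move=> k hk; apply/eqP; apply: (allP Ha); rewrite mem_iota0.
  have Rt : R t <> R 0.
    move=> E; apply: hRij.
    have F k : (k < t.+1)%N -> R k = R 0.
      by rewrite ltnS leq_eqVlt => /orP [/eqP -> //| /HA].
    by rewrite (F i hi) (F j hj).
  have [L' [uL' mL' sL']] := chain t t0 (ltnW ht).
  set s1 := [seq P k t | k <- iota 0 t].
  set s2 := [seq P t k | k <- iota 0 t].
  have cl k : (k < t)%N -> cls (e k) (R 0).
    by move=> hk; apply/(clsE _ _ (hidx k (ltnW hk))); apply: HA.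
  have nc k : (k < t)%N -> P k t != P t k.
    by move=> hk; apply: noncomm; [apply: hidx; lia|apply: hidx|rewrite (HA k hk); move=> /esym].
  exists ((s1 ++ s2 ++ [:: P t t]) ++ L'); split.
  + apply: (uniq_app t) => //.
    * move=> g; rewrite !mem_cat => /or3P [/mapP [k hk ->] | /mapP [k hk ->] | ];
        try rewrite mem_iota0 in hk.
      -- move=> H; have := inSq_cls t (R 0) (P k t) (ltnW ht) HA H.
         move/(cls_mulL (cl k hk))/(clsE _ _ (hidx t (leqnn t))); exact: Rt.
      -- move=> H; have := inSq_cls t (R 0) (P t k) (ltnW ht) HA H.
         move/(cls_mulR (cl k hk))/(clsE _ _ (hidx t (leqnn t))); exact: Rt.
      -- rewrite inE => /eqP ->; apply: notin_lvl; lia.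
    * have u1 : uniq s1.
        rewrite map_inj_in_uniq ?iota_uniq // => k l; rewrite !mem_iota => hk hl /P_lvl E.
        apply: minj; [apply: hidx; lia|apply: hidx; lia|lia].
      have u2 : uniq s2.
        rewrite map_inj_in_uniq ?iota_uniq // => k l; rewrite !mem_iota => hk hl /P_lvl E.
        apply: minj; [apply: hidx; lia|apply: hidx; lia|lia].
      rewrite cat_uniq u1 cat_uniq u2 /= andbT; apply/andP; split.
      -- apply/hasPn => g; rewrite mem_cat inE => /orP [/mapP [l hl ->]|/eqP ->].
         ++ rewrite mem_iota0 in hl; apply/mapP => -[k]; rewrite mem_iota0 => hk E.
            have E' := P_lvl _ _ _ _ E; have kl : k = l by apply: minj; [apply: hidx; lia|apply: hidx; lia|lia].
            by subst l; move/eqP: E; rewrite eq_sym (negbTE (nc k hk)).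
         ++ apply/mapP => -[k]; rewrite mem_iota0 => hk /P_lvl E.
            have := mlt hk ht; lia.
      -- rewrite orbF; apply/negP => /mapP [k]; rewrite mem_iota0 => hk /P_lvl E.
         have := mlt hk ht; lia.
  + move=> g; rewrite !mem_cat => /orP [/or3P [/mapP [k hk ->] | /mapP [k hk ->] | ] | /mL'].
    * by rewrite mem_iota0 in hk; exists k, t; split => //; lia.
    * by rewrite mem_iota0 in hk; exists t, k; split => //; lia.
    * by rewrite inE => /eqP ->; exists t, t.
    * by apply: inSq_mono.
  + move: sL'; rewrite !size_cat /= !size_map size_iota; move: (size L') => n; lia.
- move/negbT/allPn: Ha => [k hk /eqP hne]; rewrite mem_iota0 in hk.
  have [L' [uL' mL' sL']] : exists L,
    [/\ uniq L, forall g, g \in L -> inSq t g & (4 * t - 4 <= size L)%N].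
    by apply: IH => //; [exact: ltnW | exists k, 0%N; split].
  have t2 : (2 <= t)%N.
    case: k hk hne => [//|k] hk _; lia.
  case: (eqVneq (R t.-1) (R t)) => [Ett | Ntt].
  +
    have exk : exists k, (k < t)%N && (R k != R t).
      case: (eqVneq (R i) (R t)) => Ei.
        exists j; apply/andP; split; last by apply/eqP => Ej; apply: hRij; rewrite Ei Ej.
        rewrite ltnS leq_eqVlt in hj; case/orP: hj => [/eqP Ej|//].
        by subst j; case: hRij.
      exists i; rewrite Ei andbT; rewrite ltnS leq_eqVlt in hi; case/orP: hi => [/eqP Ei'|//].
      by subst i; rewrite eqxx in Ei.
    have ub : forall k, (k < t)%N && (R k != R t) -> (k <= t)%N.
      by move=> k' /andP [hk' _]; apply: ltnW.
    case: (ex_maxnP exk ub) => jj /andP [hjj Rjj] Hmax.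
    have jlt : (jj < t.-1)%N.
      have : jj != t.-1 by apply/eqP => E; move: Rjj; rewrite E Ett eqxx.
      lia.
    have hjjt : (m jj < m t.-1)%N by apply: mlt; lia.
    have key a b : (a < t)%N -> (b < t)%N -> (m jj + m t = m a + m b)%N ->
        cls (P a b) (R t).
      move=> ha hb E.
      have aR c : (c < t)%N -> (m jj < m c)%N -> R c = R t.
        move=> hc hm; case: (eqVneq (R c) (R t)) => // Ne.
        have := Hmax c; rewrite hc Ne => /(_ isT) hcj.
        have := mle hcj (hidx jj ltac:(lia)); lia.
      have ma : (m a <= m t.-1)%N by apply: mle; lia.
      have mb : (m b <= m t.-1)%N by apply: mle; lia.
      apply: cls_mul.
        by apply/(clsE _ _ (hidx a ltac:(lia))); apply: aR => //; lia.
      by apply/(clsE _ _ (hidx b ltac:(lia))); apply: aR => //; lia.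
    have n1 : ~ inSq t (P jj t).
      move=> [a [b [ha hb E]]]; have := key a b ha hb (P_lvl _ _ _ _ E); rewrite -E.
      move/(cls_mulR (cls_e (hidx t (leqnn t))))/(clsE _ _ (hidx jj ltac:(lia))) => /eqP.
      by rewrite (negbTE Rjj).
    have n2 : ~ inSq t (P t jj).
      move=> [a [b [ha hb E]]]; have := key a b ha hb ltac:(have := P_lvl _ _ _ _ E; lia); rewrite -E.
      move/(cls_mulL (cls_e (hidx t (leqnn t))))/(clsE _ _ (hidx jj ltac:(lia))) => /eqP.
      by rewrite (negbTE Rjj).
    exists ([:: P t t; P t.-1 t; P jj t; P t jj] ++ L'); split.
    * apply: (uniq_app t) => //.
      -- move=> g; rewrite !inE => /or4P [] /eqP -> //; apply: notin_lvl; lia.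
      -- apply: uniq4; try (apply: neq_lvl; lia).
         apply: noncomm; [apply: hidx; lia|apply: hidx; lia|by move/eqP: Rjj].
    * move=> g; rewrite mem_cat !inE => /orP [/or4P [] /eqP -> | /mL'].
      -- by exists t, t.
      -- by exists t.-1, t; split => //; lia.
      -- by exists jj, t; split => //; lia.
      -- by exists t, jj; split => //; lia.
      -- by apply: inSq_mono.
    * move: sL'; rewrite size_cat /=; move: (size L') => n; lia.
  +
    have h1 : (t.-1 < N)%N by apply: hidx; lia.
    have h2 : (t.-2 < N)%N by apply: hidx; lia.
    have [X [XW XYZ]] : exists X, X != P t.-1 t.-1 /\ (X = P t.-2 t \/ X = P t t.-2).
      case: (eqVneq (P t.-2 t) (P t.-1 t.-1)) => [EY | NY]; last by exists (P t.-2 t); split; [|left].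
      exists (P t t.-2); split; last by right.
      apply/eqP => EZ.
      have comm : bs_mul (e t) (e t.-2) = bs_mul (e t.-2) (e t).
        by rewrite -/(P t t.-2) -/(P t.-2 t) EZ EY.
      have c1 : cls (e t.-2) (R t) := cls_commR (e_ne1 ht) (cls_e ht) comm.
      have c2 : cls (P t.-2 t) (R t) := cls_mul c1 (cls_e ht).
      have c3 : cls (P t.-1 t.-1) (R t.-1) := cls_mul (cls_e h1) (cls_e h1).
      rewrite EY in c2; move/eqP: Ntt; apply.
      exact: cls_uniq (P_ne1 t.-1 t.-1 h1) c3 c2.
    have lvX a b : X = P a b -> (m a + m b = m t.-2 + m t)%N.
      by case: XYZ => -> /P_lvl; lia.
    have neX a b : (m a + m b != m t.-2 + m t)%N -> X != P a b.
      by move=> h; apply/eqP => /lvX; lia.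
    have h21 : (m t.-2 < m t.-1)%N by apply: mlt; lia.
    have Xn : ~ inSq t X.
      move=> [a [b [ha hb E]]].
      have [Ea Eb] := lvl_only t a b t2 ht ha hb (lvX a b E).
      by move/eqP: XW; rewrite E Ea Eb.
    exists ([:: P t t; P t.-1 t; P t t.-1; X] ++ L'); split.
    * apply: (uniq_app t) => //.
      -- move=> g; rewrite !inE => /or4P [] /eqP -> //; apply: notin_lvl; lia.
      -- apply: uniq4; try (apply: neq_lvl; lia); try (rewrite eq_sym; apply: neX; lia).
         apply: noncomm; [apply: hidx; lia|apply: hidx; lia|by move/eqP: Ntt].
    * move=> g; rewrite mem_cat !inE => /orP [/or4P [] /eqP -> | /mL'].
      -- by exists t, t.
      -- by exists t.-1, t; split => //; lia.
      -- by exists t, t.-1; split => //; lia.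
      -- by case: XYZ => ->; [exists t.-2, t|exists t, t.-2]; split => //; lia.
      -- by apply: inSq_mono.
    * move: sL'; rewrite size_cat /=; move: (size L') => n; lia.
Qed.

End Comb.

Theorem lemma2p4 (t : nat) (m : nat -> nat) (x : nat -> int) :
  (2 <= t)%N ->
  (1 <= m 0)%N ->
  (forall i j, (i < j < t)%N -> (m i < m j)%N) ->
  let S := [seq bs_elt (m i) (x i) | i <- iota 0 t] in
  nonabelian S ->
  (4 * t - 4 <= size (sqset S))%N.
Proof.
move=> t2 m0 inc S NA.
have NA' : exists i j, [/\ (i < t)%N, (j < t)%N & R m x i <> R m x j].
  case Ha: (all (fun k => R m x k == R m x 0) (iota 0 t)).
    exfalso; case: NA => g [h [gg gh nc]].
    have HS : forall s, s \in S -> cls s (R m x 0).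
      move=> s /mapP [i hi ->]; rewrite mem_iota0 in hi.
      apply/(clsE m x t m0 inc i _ hi); apply/eqP; apply: (allP Ha); by rewrite mem_iota0.
    exact: nc (cls_comm _ _ _ (gen_cls _ _ _ HS gg) (gen_cls _ _ _ HS gh)).
  move/negbT/allPn: Ha => [k hk /eqP hne]; rewrite mem_iota0 in hk.
  by exists k, 0%N; split => //; lia.
have [L [uL mL sL]] := main m x t m0 inc t ltac:(lia) (leqnn t) NA'.
apply: leq_trans sL _; apply: uniq_leq_size uL _ => g /mL [a [b [ha hb ->]]].
rewrite mem_undup; apply: (allpairs_f bs_mul).
- by apply: (map_f (fun i => bs_elt (m i) (x i))); rewrite mem_iota0.
- by apply: (map_f (fun i => bs_elt (m i) (x i))); rewrite mem_iota0.
Qed.
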